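(* For $v\in\mathbb{C}$, $w\in\mathbb{C}\setminus\{1\}$ and integers $r\geq0$ define \begin{align*} U_r(w;v)&=\delta_{r,0}-\sum_{m=0}^{r}(-1)^m\binom{v}{r-m}\sum_{k=0}^{m}\frac{w}{(w-1)^{r+k+1}}\frac{(r+k)!}{k!}\mathcal{A}_{m,k}\!\left(\tfrac12,\tfrac13,\tfrac14,\dots\right),\\ \tilde U_r(w;v)&=-\sum_{m=0}^{r}\frac{v^{r-m}}{(r-m)!}\sum_{k=0}^{m}\frac{(-w)^k}{(w-1)^{r+k+1}}\frac{(r+k)!}{k!}\mathcal{A}_{m,k}\!\left(\tfrac1{2!},\tfrac1{3!},\tfrac1{4!},\dots\right). \end{align*} Then $U_0(w;v)=\tilde U_0(w;v)$ and $U_r(w;v)=\tilde U_r(w;v)+v\,\tilde U_{r-1}(w;v)$ for $r\geq1$.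
   Context: De Moivre polynomial $\mathcal{A}_{n,k}(a_1,a_2,\dots)$: coefficient of $x^n$ in $(a_1x+a_2x^2+\cdots)^k$ (so $\mathcal{A}_{0,0}=1$, $\mathcal{A}_{n,k}=0$ for $n<k$). $\binom{v}{j}=v(v-1)\cdots(v-j+1)/j!$; $\delta_{r,0}$ Kronecker delta. *)

(* Defs.v *)
From HB Require Import structures.
From mathcomp Require Import all_boot all_order all_algebra.
From mathcomp Require Import reals complex.
Set Implicit Arguments. Unset Strict Implicit. Unset Printing Implicit Defensive.
Import Order.TTheory GRing.Theory Num.Theory.
Local Open Scope ring_scope.

(* De Moivre polynomial A_{n,k}(a_1,a_2,...): coefficient of x^n in
   (a_1 x + a_2 x^2 + ...)^k.  Only a_1..a_n can contribute to the x^n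
   coefficient, so the series is truncated at degree n. *)
Definition deMoivre {F : comNzRingType} (a : nat -> F) (n k : nat) : F :=
  ((\sum_(1 <= i < n.+1) a i *: 'X^i) ^+ k)`_n.

Definition gbinom {F : fieldType} (v : F) (j : nat) : F :=
  (\prod_(i < j) (v - i%:R)) / (j`!)%:R.

Definition kdelta {F : nzRingType} (r : nat) : F := if r == 0%N then 1 else 0.

Section UDefs.
Variable F : fieldType.

Definition seq_inv (i : nat) : F := ((i.+1)%:R)^-1.
Definition seq_invfact (i : nat) : F := (((i.+1)`!)%:R)^-1.

Definition U (r : nat) (w v : F) : F :=
  kdelta r - \sum_(0 <= m < r.+1) (-1) ^+ m * gbinom v (r - m) *
    \sum_(0 <= k < m.+1) w / (w - 1) ^+ (r + k).+1 *
       (((r + k)`!)%:R / (k`!)%:R) * deMoivre seq_inv m k.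

Definition Utilde (r : nat) (w v : F) : F :=
  - \sum_(0 <= m < r.+1) v ^+ (r - m) / ((r - m)`!)%:R *
    \sum_(0 <= k < m.+1) (- w) ^+ k / (w - 1) ^+ (r + k).+1 *
       (((r + k)`!)%:R / (k`!)%:R) * deMoivre seq_invfact m k.
End UDefs.

(* Main.v *)
Require Import Defs.
From HB Require Import structures.
From mathcomp Require Import all_boot all_order all_algebra.
From mathcomp Require Import reals complex.
From mathcomp Require Import ring.
Set Implicit Arguments. Unset Strict Implicit. Unset Printing Implicit Defensive.
Import Order.TTheory GRing.Theory Num.Theory.
Local Open Scope ring_scope.


Section Eqm.
Variable F : numFieldType.
Implicit Types p q : {poly F}.

Definition eqm (N : nat) p q := forall i, (i < N)%N -> p`_i = q`_i.

Lemma eqm_refl N p : eqm N p p. Proof. by []. Qed.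
Lemma eqm_sym N p q : eqm N p q -> eqm N q p.
Proof. by move=> h i hi; rewrite h. Qed.
Lemma eqm_trans N p q s : eqm N p q -> eqm N q s -> eqm N p s.
Proof. by move=> h1 h2 i hi; rewrite h1 // h2. Qed.
Lemma eqm_le M N p q : (M <= N)%N -> eqm N p q -> eqm M p q.
Proof. by move=> hMN h i hi; apply: h; apply: leq_trans hMN. Qed.
Lemma eqm_add N p q p' q' : eqm N p p' -> eqm N q q' -> eqm N (p + q) (p' + q').
Proof. by move=> h1 h2 i hi; rewrite !coefD h1 // h2. Qed.
Lemma eqm_opp N p p' : eqm N p p' -> eqm N (- p) (- p').
Proof. by move=> h1 i hi; rewrite !coefN h1. Qed.
Lemma eqm_sub N p q p' q' : eqm N p p' -> eqm N q q' -> eqm N (p - q) (p' - q').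
Proof. by move=> h1 h2; apply: eqm_add => //; apply: eqm_opp. Qed.
Lemma eqm_scale N c p p' : eqm N p p' -> eqm N (c *: p) (c *: p').
Proof. by move=> h1 i hi; rewrite !coefZ h1. Qed.
Lemma eqm_mul N p q p' q' : eqm N p p' -> eqm N q q' -> eqm N (p * q) (p' * q').
Proof.
move=> h1 h2 i hi; rewrite !coefM; apply: eq_bigr => j _.
rewrite h1; last by apply: leq_ltn_trans hi; rewrite -ltnS.
by rewrite h2 //; apply: leq_ltn_trans hi; apply: leq_subr.
Qed.
Lemma eqm_exp N p p' k : eqm N p p' -> eqm N (p ^+ k) (p' ^+ k).
Proof.
move=> h; elim: k => [|k IH]; first by rewrite !expr0.
by rewrite !exprS; apply: eqm_mul.
Qed.
Lemma eqm_deriv N p q : eqm N.+1 p q -> eqm N p^`() q^`().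
Proof. by move=> h i hi; rewrite !coef_deriv h. Qed.
Lemma eqm_XM N p q : eqm N p q -> eqm N.+1 ('X * p) ('X * q).
Proof. by move=> h [|i] hi; rewrite !coefXM //= h. Qed.
Lemma eqm_XM_inv N p q : eqm N.+1 ('X * p) ('X * q) -> eqm N p q.
Proof. by move=> h i hi; have := h i.+1 hi; rewrite !coefXM. Qed.

Lemma exp_low q k i : q`_0 = 0 -> (i < k)%N -> (q ^+ k)`_i = 0.
Proof.
move=> q0; elim: k i => [//|k IH] i hi.
rewrite exprS coefM big1 // => [[[|j]]] /= hj _; first by rewrite q0 mul0r.
rewrite IH ?mulr0 //; rewrite ltnS in hi.
by apply: leq_ltn_trans (leq_sub2l _ (ltn0Sn j)) _; rewrite subn1 -ltnS prednK ?(leq_trans _ hi) //; case: i hi hj.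
Qed.

Lemma coef_comp_low N p q n : q`_0 = 0 -> (n < N)%N ->
  (p \Po q)`_n = \sum_(i < N) p`_i * (q ^+ i)`_n.
Proof.
move=> q0 hn; rewrite coef_comp_poly.
rewrite (big_ord_widen (size p + N) (fun i => p`_i * (q ^+ i)`_n)) ?leq_addr //.
rewrite [RHS](big_ord_widen (size p + N) (fun i => p`_i * (q ^+ i)`_n)) ?leq_addl //.
rewrite big_mkcond [RHS]big_mkcond; apply: eq_bigr => i _.
case: ltnP => h1; case: ltnP => h2 //.
  by rewrite exp_low ?mulr0 //; apply: leq_trans hn h2.
by rewrite nth_default ?mul0r.
Qed.

Lemma eqm_comp N p q p' q' : q`_0 = 0 -> q'`_0 = 0 ->
  eqm N p p' -> eqm N q q' -> eqm N (p \Po q) (p' \Po q').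
Proof.
move=> q0 q0' h1 h2 n hn; rewrite (coef_comp_low p q0 hn) (coef_comp_low p' q0' hn).
by apply: eq_bigr => i _; rewrite h1 // (eqm_exp i h2).
Qed.
End Eqm.
Section Eqm2.
Variable F : numFieldType.
Implicit Types p q : {poly F}.

Lemma natmul_inj (x y : F) k : x *+ k.+1 = y *+ k.+1 -> x = y.
Proof.
move=> h; have nz : (k.+1)%:R != 0 :> F by rewrite pnatr_eq0.
by apply: (mulIf nz); rewrite !mulr_natr.
Qed.

Lemma eqm_deriv_uniq N p q : eqm N p^`() q^`() -> p`_0 = q`_0 -> eqm N.+1 p q.
Proof.
move=> h h0 [//|i] hi; have := h i hi; rewrite !coef_deriv; exact: natmul_inj.
Qed.

Lemma eqm_ode N c p q : eqm N p^`() (c *: p) -> eqm N q^`() (c *: q) ->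
  p`_0 = q`_0 -> eqm N.+1 p q.
Proof.
move=> hp hq h0 i; elim: i => [//|i IH] hi.
have := hp i hi; have := hq i hi; rewrite !coef_deriv !coefZ IH 1?ltnW // => <-.
exact: natmul_inj.
Qed.

Lemma comp_polyXn_ p q k : (p ^+ k) \Po q = (p \Po q) ^+ k.
Proof.
elim: k => [|k IH]; first by rewrite !expr0 -polyC1 comp_polyC.
by rewrite !exprS comp_polyM IH.
Qed.

Lemma coef0_comp p q : q`_0 = 0 -> (p \Po q)`_0 = p`_0.
Proof.
move=> q0; rewrite (coef_comp_low (N:=1) p q0) // big_ord1 expr0 coefC /=.
by rewrite mulr1.
Qed.

Lemma eqm_comp1 N p p' q : q`_0 = 0 -> eqm N p p' -> eqm N (p \Po q) (p' \Po q).
Proof. by move=> q0 h; apply: eqm_comp. Qed.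

Lemma exists_inv N p : p`_0 != 0 -> exists z, eqm N (p * z) 1.
Proof.
move=> p0; set q := 1 - (p`_0)^-1 *: p.
have q0 : q`_0 = 0 by rewrite /q coefB coefZ coefC /= mulVf // subrr.
exists ((p`_0)^-1 *: \sum_(i < N) q ^+ i).
have -> : p * ((p`_0)^-1 *: \sum_(i < N) q ^+ i) = 1 - q ^+ N.
  rewrite -scalerAr scalerAl.
  have -> : (p`_0)^-1 *: p = - (q - 1) by rewrite /q opprB opprB addrC subrK.
  by rewrite mulNr -subrX1 opprB.
by move=> i hi; rewrite coefB exp_low // subr0.
Qed.

Lemma inv_uniq N p z z' : eqm N (p * z) 1 -> eqm N (p * z') 1 -> eqm N z z'.
Proof.
move=> h1 h2.
have e1 : eqm N z (z * (p * z')) by rewrite -[X in eqm _ X _]mulr1; apply: eqm_mul => //; apply: eqm_sym.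
apply: (eqm_trans e1); rewrite mulrA [z * p]mulrC -[X in eqm _ _ X]mul1r.
exact: eqm_mul.
Qed.

Lemma inv_deriv N p z : eqm N.+1 (p * z) 1 -> eqm N z^`() (- (z ^+ 2 * p^`())).
Proof.
move=> h.
have hd : eqm N (p^`() * z + p * z^`()) 0.
  by have := eqm_deriv h; rewrite derivM -polyC1 derivC.
have hN : eqm N (p * z) 1 by apply: eqm_le h.
have e1 : eqm N z^`() (z * (p * z^`())).
  rewrite -[X in eqm _ X _]mul1r mulrA [z * p]mulrC; apply: eqm_mul => //; exact: eqm_sym.
apply: (eqm_trans e1).
have e2 : eqm N (p * z^`()) (- (p^`() * z)).
  move=> i hi; have := hd i hi; rewrite coefD coef0 coefN => /eqP; rewrite addrC addr_eq0 => /eqP ->.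
  by [].
have e3 := eqm_mul (@eqm_refl _ N z) e2. apply: (eqm_trans e3).
have -> : z * - (p^`() * z) = - (z ^+ 2 * p^`()).
  by rewrite mulrN expr2 mulrCA [p^`() * _]mulrC.
exact: eqm_refl.
Qed.
End Eqm2.
Section Lagrange.
Variable F : numFieldType.
Implicit Types p q : {poly F}.

Lemma eqm_muln N p q k : eqm N p q -> eqm N (p *+ k) (q *+ k).
Proof. by move=> h i hi; rewrite !coefMn h. Qed.

Lemma low_mul p q j n : (forall i, (i < j)%N -> p`_i = 0) -> (n < j)%N -> (p * q)`_n = 0.
Proof.
move=> hp hn; rewrite coefM big1 // => i _; rewrite hp ?mul0r //.
by apply: leq_ltn_trans hn; rewrite -ltnS.
Qed.

Lemma lagr_m m (psi Z : {poly F}) : eqm m.+1 (psi * Z) 1 ->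
  ((('X * psi)^`()) * Z ^+ m.+1)`_m = (m == 0%N)%:R.
Proof.
move=> h; rewrite derivM derivX mul1r mulrDl coefD.
have e1 : (psi * Z ^+ m.+1)`_m = (Z ^+ m)`_m.
  rewrite exprS mulrA; have := eqm_mul h (@eqm_refl _ m.+1 (Z ^+ m)).
  by rewrite mul1r => ->.
rewrite e1; case: m h e1 => [|s] h e1.
  by rewrite expr0 coefC /= -mulrA coefXM /= addr0.
rewrite -mulrA coefXM /=.
have hd : eqm s.+1 Z^`() (- (Z ^+ 2 * psi^`())) by exact: inv_deriv h.
have e2 := eqm_muln s.+1 (eqm_mul hd (@eqm_refl _ s.+1 (Z ^+ s))).
have e3 := e2 s (ltnSn s).
have e4 : (Z ^+ s.+1)^`() = Z^`() * Z ^+ s *+ s.+1 by rewrite deriv_exp.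
rewrite -e4 coef_deriv coefMn in e3.
have e5 : - (Z ^+ 2 * psi^`()) * Z ^+ s = - (psi^`() * Z ^+ s.+2).
  by rewrite !exprS expr0; ring.
rewrite e5 coefN in e3.
by rewrite (natmul_inj e3) addNr.
Qed.

Lemma lagr_term n j (psi Z : {poly F}) : eqm n.+1 (psi * Z) 1 ->
  ((('X * psi) ^+ j) * ('X * psi)^`() * Z ^+ n.+1)`_n = ('X^j)`_n.
Proof.
move=> h; rewrite coefXn; case: (ltnP n j) => hnj.
  rewrite -mulrA (low_mul _ _ hnj) ?(ltn_eqF hnj) // => i hi.
  by apply: exp_low; rewrite // coefXM.
have -> : n.+1 = (j + (n - j).+1)%N by rewrite addnS subnKC.
rewrite exprMn exprD -!mulrA coefXnM ltnNge hnj /=.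
set m := (n - j)%N.
have -> : psi ^+ j * (('X * psi)^`() * (Z ^+ j * Z ^+ m.+1)) =
   (psi * Z) ^+ j * (('X * psi)^`() * Z ^+ m.+1).
  by rewrite exprMn; ring.
have hm : eqm m.+1 ((psi * Z) ^+ j) 1.
  rewrite -(expr1n _ j); apply: eqm_exp; apply: (eqm_le _ h).
  by rewrite ltnS /m leq_subr.
have := eqm_mul hm (@eqm_refl _ m.+1 (('X * psi)^`() * Z ^+ m.+1)).
rewrite mul1r => -> //.
rewrite lagr_m; last by apply: (eqm_le _ h); rewrite ltnS /m leq_subr.
by rewrite /m subn_eq0 eq_sym eqn_leq hnj.
Qed.

Lemma lagrange n (psi Z H : {poly F}) : eqm n.+1 (psi * Z) 1 ->
  H`_n = ((H \Po ('X * psi)) * ('X * psi)^`() * Z ^+ n.+1)`_n.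
Proof.
move=> h; rewrite comp_polyE !mulr_suml coef_sum.
rewrite -{1}(coefK H) poly_def coef_sum; apply: eq_bigr => j _.
by rewrite -!scalerAl !coefZ lagr_term.
Qed.
End Lagrange.
Section Series.
Variable F : numFieldType.
Implicit Types p q : {poly F}.

Definition ex K (c : F) : {poly F} := \poly_(i < K) (c ^+ i / (i`!)%:R).
Definition psiK K : {poly F} := \poly_(i < K) seq_invfact F i.
Definition bin K (v : F) : {poly F} := \poly_(i < K) gbinom v i.

Lemma natr_fact_neq0 n : (n`!)%:R != 0 :> F.
Proof. by rewrite pnatr_eq0 -lt0n fact_gt0. Qed.
Lemma natr_S_neq0 n : (n.+1)%:R != 0 :> F.
Proof. by rewrite pnatr_eq0. Qed.

Lemma ex_deriv N K c : (N < K)%N -> eqm N (ex K c)^`() (c *: ex K c).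
Proof.
move=> hK i hi; rewrite coef_deriv coefZ !coef_poly.
have h1 : (i.+1 < K)%N by apply: leq_ltn_trans hK.
rewrite h1 (ltnW h1) factS natrM -mulr_natr exprS.
have := natr_fact_neq0 i; have := natr_S_neq0 i => h2 h3; field.
rewrite ?(addrC 1) ?natr1 ?h2 ?h3 //=.
Qed.

Lemma ex0 K c : (0 < K)%N -> (ex K c)`_0 = 1.
Proof. by move=> h; rewrite coef_poly h expr0 fact0 divr1. Qed.

Lemma phi_deriv N K : (N <= K)%N -> eqm N ('X * psiK K)^`() (1 + 'X * psiK K).
Proof.
move=> hK i hi; rewrite coef_deriv coefD coefC !coefXM /= coef_poly.
have h1 : (i < K)%N by apply: leq_trans hK.
rewrite h1 /seq_invfact; case: i hi h1 => [|i] hi h1.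
  by rewrite /= factS fact0 muln1 invr1 addr0.
rewrite /= add0r coef_poly (ltnW h1) /seq_invfact -mulr_natr factS natrM.
have := natr_fact_neq0 (i.+1); have := natr_S_neq0 (i.+1) => h2 h3; field.
by rewrite h3 -natrD pnatr_eq0.
Qed.

Lemma phi0 K : ('X * psiK K)`_0 = 0.
Proof. by rewrite coefXM. Qed.

Lemma gbinomS (v : F) i : gbinom v i.+1 * (i.+1)%:R = gbinom v i * (v - i%:R).
Proof.
rewrite /gbinom big_ord_recr /= factS natrM.
have := natr_fact_neq0 i; have := natr_S_neq0 i => h2 h3; field.
rewrite ?(addrC 1) ?natr1 ?h2 ?h3 //=.
Qed.

Lemma gbinom0 (v : F) : gbinom v 0 = 1.
Proof. by rewrite /gbinom big_ord0 fact0 divr1. Qed.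

Lemma bin_deriv N K v : (N < K)%N -> eqm N ((bin K v)^`() * (1 + 'X)) (v *: bin K v).
Proof.
move=> hK i hi; rewrite mulrDr mulr1 coefD coefMX !coef_deriv coefZ !coef_poly.
have h1 : (i.+1 < K)%N by apply: leq_ltn_trans hK.
rewrite h1 (ltnW h1) -mulr_natr gbinomS.
case: i hi h1 => [|i] hi h1 /=; first by rewrite addr0 subr0 mulrC.
by rewrite (ltnW h1); ring.
Qed.

Lemma bin_comp N K v : (N < K)%N -> eqm N.+1 (bin K v \Po ('X * psiK K)) (ex K v).
Proof.
move=> hK; apply: (@eqm_ode _ N v).
- rewrite deriv_comp.
  have e1 := eqm_mul (@eqm_refl _ N ((bin K v)^`() \Po ('X * psiK K))) (phi_deriv (ltnW hK)).
  apply: (eqm_trans e1).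
  have -> : 1 + 'X * psiK K = (1 + 'X) \Po ('X * psiK K).
    by rewrite comp_polyD comp_polyX -polyC1 comp_polyC.
  rewrite -comp_polyM -comp_polyZ; apply: eqm_comp1; first exact: phi0.
  exact: bin_deriv.
- exact: ex_deriv.
- rewrite coef0_comp ?phi0 // ex0 ?(leq_ltn_trans _ hK) // coef_poly.
  by rewrite (leq_ltn_trans _ hK) // gbinom0.
Qed.
End Series.
Section Ell.
Variable F : numFieldType.
Implicit Types p q : {poly F}.

Definition Ga (a : nat -> F) n : {poly F} := \sum_(1 <= i < n.+1) a i *: 'X^i.

Lemma Ga_poly a n : Ga a n = \poly_(i < n.+1) (if i == 0%N then 0 else a i).
Proof.
rewrite /Ga poly_def big_ord_recl /= scale0r add0r big_add1 /= big_mkord.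
by apply: eq_bigr => i _.
Qed.

Lemma coef_Ga a n j : (Ga a n)`_j = if (0 < j <= n)%N then a j else 0.
Proof.
rewrite Ga_poly coef_poly ltnS; case: j => [|j] //=; by case: ifP.
Qed.

Lemma coef_compN p i : (p \Po - 'X)`_i = (-1) ^+ i * p`_i.
Proof.
have -> : p \Po - 'X = \poly_(j < size p) ((-1) ^+ j * p`_j).
  rewrite comp_polyE poly_def; apply: eq_bigr => j _.
  by rewrite -scaleN1r exprZn scalerA mulrC.
rewrite coef_poly; case: ltnP => // h; by rewrite nth_default ?mulr0.
Qed.

Definition ell r : {poly F} := 'X * (1 + (Ga (seq_inv F) r \Po - 'X)).

Lemma coef_L0 r j : (1 + (Ga (seq_inv F) r \Po - 'X))`_j =
  if (j <= r)%N then (-1) ^+ j * seq_inv F j else 0.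
Proof.
rewrite coefD coefC coef_compN coef_Ga; case: j => [|j] /=.
  by rewrite mulr0 expr0 mul1r /seq_inv invr1; ring.
by case: ifP => _; ring.
Qed.

Lemma ell_deriv r : eqm r.+1 ((ell r)^`() * (1 + 'X)) 1.
Proof.
move=> i hi; rewrite mulrDr mulr1 coefD coefMX !coef_deriv coefC /ell coefXM /= coef_L0.
rewrite ltnS in hi; rewrite hi; case: i hi => [|s] hi /=.
  by rewrite expr0 mul1r /seq_inv invr1 addr0.
rewrite coefXM /= coef_L0 (ltnW hi) /seq_inv exprS.
have := natr_S_neq0 F s; have := natr_S_neq0 F s.+1 => h2 h3; field.
by rewrite -natrD pnatr_eq0 (addrC 1) natr1 h3.
Qed.

Lemma ell_comp r K : (r < K)%N -> eqm r.+2 (ell r \Po ('X * psiK F K)) 'X.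
Proof.
move=> hK; apply: eqm_deriv_uniq.
- rewrite deriv_comp derivX.
  have e1 := eqm_mul (@eqm_refl _ r.+1 ((ell r)^`() \Po ('X * psiK F K))) (@phi_deriv F _ _ hK).
  apply: (eqm_trans e1).
  have -> : 1 + 'X * psiK F K = (1 + 'X) \Po ('X * psiK F K).
    by rewrite comp_polyD comp_polyX -polyC1 comp_polyC.
  rewrite -comp_polyM.
  have e2 := eqm_comp1 (phi0 F K) (@ell_deriv r).
  by rewrite -polyC1 comp_polyC polyC1 in e2.
- by rewrite coef0_comp ?phi0 // /ell coefXM coefX.
Qed.
End Ell.
Section PfSec.
Variable F : numFieldType.
Implicit Types p q : {poly F}.

Definition cc r k : F := ((r + k)`!)%:R / (k`!)%:R.
Definition Pf r : {poly F} := \sum_(k < r.+1) cc r k *: 'X^k.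

Lemma Pf_poly r : Pf r = \poly_(k < r.+1) cc r k.
Proof. by rewrite poly_def. Qed.

Lemma cc_rec r i : cc r i.+1 * (i.+1)%:R = cc r i * (r.+1 + i)%:R.
Proof.
rewrite /cc addnS !factS !natrM addSn.
have := natr_fact_neq0 F i; have := natr_S_neq0 F i => h2 h3.
have h4 := natr_fact_neq0 F (r + i).
field.
by rewrite h3 addrC natr1 h2.
Qed.

Lemma Pf_main r : eqm r.+1 (Pf r * (1 - 'X) ^+ r.+1) ((r`!)%:R)%:P.
Proof.
apply: eqm_deriv_uniq; last first.
  rewrite coef0M -[((1 - 'X) ^+ r.+1)`_0]horner_coef0 horner_exp !hornerE subr0 expr1n mulr1 Pf_poly coef_poly /=.
  by rewrite /cc addn0 fact0 divr1 coefC.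
have -> : ((r`!%:R)%:P)^`() = 0 :> {poly F} by rewrite derivC.
rewrite derivM deriv_exp derivB derivX -polyC1 derivC sub0r polyC1.
set W := (Pf r)^`() * (1 - 'X) - (r.+1)%:R *: Pf r.
have -> : (Pf r)^`() * (1 - 'X) ^+ r.+1 + Pf r * (- 1 * (1 - 'X) ^+ r.+1.-1 *+ r.+1)
   = (1 - 'X) ^+ r * W.
  by rewrite /W /= exprS !scaler_nat; ring.
have hW : eqm r W 0.
  move=> i hi; rewrite /W coefB coefZ mulrBr mulr1 coefB coefMX !coef_deriv coef0.
  rewrite Pf_poly !coef_poly; case: i hi => [|i] hi /=.
    have h := cc_rec r 0; rewrite mulr_natr mulr_natr in h.
    rewrite ltnS hi h; ring.
  have h := cc_rec r i.+1; rewrite mulr_natr mulr_natr in h.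
  have h' := cc_rec r i; rewrite mulr_natr mulr_natr in h'.
  rewrite !ltnS hi (ltnW hi) h; ring.
have e := eqm_mul (@eqm_refl _ r ((1 - 'X) ^+ r)) hW.
by rewrite mulr0 in e.
Qed.
End PfSec.
Section YSec.
Variable F : numFieldType.
Implicit Types p q : {poly F}.

Lemma comp_sumX n (a : nat -> F) q :
  (\sum_(k < n) a k *: 'X^k) \Po q = \sum_(k < n) a k *: q ^+ k.
Proof.
elim: n => [|n IH]; first by rewrite !big_ord0 comp_poly0.
by rewrite !big_ord_recr /= comp_polyD IH comp_polyZ comp_Xn_poly.
Qed.

Lemma Y_main r (G : {poly F}) (al c : F) : G`_0 = 0 -> c != 0 ->
  eqm r.+1 ((\sum_(k < r.+1) (al ^+ k * c ^+ (r + k).+1 * cc F r k) *: G ^+ k)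
             * ((c^-1)%:P - al *: G) ^+ r.+1) ((r`!)%:R)%:P.
Proof.
move=> G0 c0; set q := (al * c) *: G.
have q0 : q`_0 = 0 by rewrite /q coefZ G0 mulr0.
have e1 : \sum_(k < r.+1) (al ^+ k * c ^+ (r + k).+1 * cc F r k) *: G ^+ k
          = c ^+ r.+1 *: (Pf F r \Po q).
  rewrite /Pf comp_sumX scaler_sumr; apply: eq_bigr => k _.
  rewrite /q exprZn !scalerA; congr (_ *: _).
  by rewrite !exprS exprD exprMn; ring.
have e2 : (c^-1)%:P - al *: G = c^-1 *: (1 - q).
  by rewrite /q scalerBr scalerA mulrCA mulVf // mulr1 alg_polyC.
rewrite e1 e2 exprZn -scalerAl -scalerAr scalerA -exprMn mulfV // expr1n scale1r.
have -> : 1 - q = (1 - 'X) \Po q by rewrite comp_polyB comp_polyX -polyC1 comp_polyC.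
rewrite -comp_polyXn_ -comp_polyM.
have -> : ((r`!)%:R)%:P = ((r`!)%:R)%:P \Po q by rewrite comp_polyC.
by apply: eqm_comp1 => //; apply: Pf_main.
Qed.

Lemma cancel_inv N p z y y' : eqm N (p * z) 1 -> eqm N (y * p) (y' * p) -> eqm N y y'.
Proof.
move=> h1 h2.
have e1 := eqm_mul h2 (@eqm_refl _ N z).
rewrite -!mulrA in e1.
have e2 := eqm_mul (@eqm_refl _ N y) h1. have e3 := eqm_mul (@eqm_refl _ N y') h1.
rewrite mulr1 in e2; rewrite mulr1 in e3.
exact: eqm_trans (eqm_sym e2) (eqm_trans e1 e3).
Qed.

Lemma Ga0 a n : (Ga a n)`_0 = 0 :> F.
Proof. by rewrite coef_Ga. Qed.

Lemma deMoivre_sum (a : nat -> F) r m (f : nat -> F) : (m <= r)%N ->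
  \sum_(0 <= k < m.+1) f k * deMoivre a m k =
  (\sum_(k < r.+1) f k *: (Ga a r) ^+ k)`_m.
Proof.
move=> hm; rewrite coef_sum big_mkord.
rewrite (big_ord_widen r.+1 (fun k => f k * deMoivre a m k)) // big_mkcond.
apply: eq_bigr => k _; rewrite coefZ.
case: ltnP => hk.
  congr (_ * _); rewrite /deMoivre -/(Ga a m).
  apply: (eqm_exp (N:=m.+1)) => // j hj; rewrite !coef_Ga; case: j hj => [|j] //= hj.
  by rewrite ltnS in hj; rewrite hj (leq_trans hj hm).
by rewrite (exp_low (Ga0 a r) hk) mulr0.
Qed.
End YSec.
Section UExpr.
Variable F : numFieldType.
Implicit Types p q : {poly F}.

Definition Bx r (w : F) : {poly F} := (w - 1)%:P - (Ga (seq_inv F) r \Po - 'X).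

Lemma negX0 : (- 'X : {poly F})`_0 = 0.
Proof. by rewrite coefN coefX oppr0. Qed.

Lemma U_expr r (w v : F) K : w != 1 -> (r < K)%N ->
  exists Y1, eqm r.+1 (Y1 * Bx r w ^+ r.+1) ((r`!)%:R)%:P /\
    U r w v = kdelta r - w * (bin K v * Y1)`_r.
Proof.
move=> hw hK; have w1 : w - 1 != 0 by rewrite subr_eq0.
set c := (w - 1)^-1; have c0 : c != 0 by rewrite invr_eq0.
set G := Ga (seq_inv F) r.
set Y := \sum_(k < r.+1) (1 ^+ k * c ^+ (r + k).+1 * cc F r k) *: G ^+ k.
exists (Y \Po - 'X); split.
  have h := Y_main (r:=r) 1 (Ga0 (seq_inv F) r) c0.
  rewrite -/G -/Y scale1r /c invrK in h.
  have h2 := eqm_comp1 negX0 h; rewrite comp_polyC comp_polyM comp_polyXn_ comp_polyB comp_polyC in h2.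
  exact: h2.
have eY : \sum_(k < r.+1) (w / (w - 1) ^+ (r + k).+1 * (((r + k)`!)%:R / (k`!)%:R)) *: G ^+ k
          = w *: Y.
  rewrite /Y scaler_sumr; apply: eq_bigr => k _; rewrite scalerA; congr (_ *: _).
  by rewrite expr1n mul1r /c exprVn /cc !mulrA.
rewrite /U; congr (_ - _).
rewrite coefMr mulr_sumr big_mkord; apply: eq_bigr => m _.
have hm : (m <= r)%N by rewrite -ltnS ltn_ord.
rewrite (@deMoivre_sum F (seq_inv F) r m (fun k => w / (w - 1) ^+ (r + k).+1 * (((r + k)`!)%:R / (k`!)%:R)) hm).
rewrite -/G eY coefZ coef_compN coef_poly (leq_ltn_trans (leq_subr m r) hK).
ring.
Qed.

Lemma Ut_expr s (w v : F) K : w != 1 -> (s < K)%N ->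
  exists Y, eqm s.+1 (Y * (w *: psiK F K - 1) ^+ s.+1) ((s`!)%:R)%:P /\
    Utilde s w v = - (ex K v * Y)`_s.
Proof.
move=> hw hK; have w1 : w - 1 != 0 by rewrite subr_eq0.
set c := (w - 1)^-1; have c0 : c != 0 by rewrite invr_eq0.
set G := Ga (seq_invfact F) s.
set Y := \sum_(k < s.+1) ((- w) ^+ k * c ^+ (s + k).+1 * cc F s k) *: G ^+ k.
exists Y; split.
  have h := Y_main (r:=s) (- w) (Ga0 (seq_invfact F) s) c0.
  rewrite -/G -/Y /c invrK in h.
  apply: (eqm_trans _ h); apply: eqm_mul => //; apply: eqm_exp.
  move=> j hj; rewrite coefB coefZ coefC coefB coefC coefZ coef_Ga coef_poly.
  rewrite (leq_trans hj hK); case: j hj => [|j] hj /=.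
    by rewrite /seq_invfact factS fact0 muln1 invr1 mulr1 mulr0 subr0.
  by rewrite -ltnS hj subr0 sub0r mulNr opprK.
have eY : \sum_(k < s.+1) ((- w) ^+ k / (w - 1) ^+ (s + k).+1 * (((s + k)`!)%:R / (k`!)%:R)) *: G ^+ k
          = Y.
  rewrite /Y; apply: eq_bigr => k _; congr (_ *: _).
  by rewrite /c exprVn /cc !mulrA.
rewrite /Utilde; congr (- _).
rewrite coefMr big_mkord; apply: eq_bigr => m _.
have hm : (m <= s)%N by rewrite -ltnS ltn_ord.
rewrite (@deMoivre_sum F (seq_invfact F) s m (fun k => (- w) ^+ k / (w - 1) ^+ (s + k).+1 * (((s + k)`!)%:R / (k`!)%:R)) hm).
by rewrite -/G eY coef_poly (leq_ltn_trans (leq_subr m s) hK).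
Qed.
End UExpr.
Section Core.
Variable F : numFieldType.
Implicit Types p q : {poly F}.

Lemma psi0 K : (0 < K)%N -> (psiK F K)`_0 = 1.
Proof. by move=> h; rewrite coef_poly h /seq_invfact factS fact0 muln1 invr1. Qed.

Lemma scal_inv_eq N s (B Z Y : {poly F}) (c : F) : eqm N (B * Z) 1 ->
  eqm N (Y * B ^+ s) c%:P -> eqm N Y (c *: Z ^+ s).
Proof.
move=> hZ hY.
have hp : eqm N (B ^+ s * Z ^+ s) 1 by rewrite -exprMn -(expr1n _ s); apply: eqm_exp.
apply: (cancel_inv hp); apply: (eqm_trans hY).
rewrite -scalerAl mulrC -alg_polyC; apply: eqm_scale; apply: eqm_sym; exact: hp.
Qed.

Lemma core_Ut s (w v : F) K (Z : {poly F}) : w != 1 -> (s < K)%N ->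
  eqm s.+1 ((w *: psiK F K - 1) * Z) 1 ->
  Utilde s w v = - ((s`!)%:R * (ex K v * Z ^+ s.+1)`_s).
Proof.
move=> hw hK hZ; have [Y [hY ->]] := @Ut_expr F s w v K hw hK.
have e := scal_inv_eq hZ hY.
by rewrite (eqm_mul (@eqm_refl _ s.+1 (ex K v)) e) // -scalerAr coefZ.
Qed.

Lemma core_U r (w v : F) K (Z : {poly F}) : w != 1 -> (r < K)%N ->
  eqm r.+1 ((w *: psiK F K - 1) * Z) 1 ->
  U r w v = kdelta r - (r`!)%:R * (ex K v * Z ^+ r.+1 * (w *: ('X * psiK F K)^`()))`_r.
Proof.
move=> hw hK hZ; have [Y1 [hY ->]] := @U_expr F r w v K hw hK.
set B := w *: psiK F K - 1; set psi := psiK F K; set phi := 'X * psi.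
have w1 : w - 1 != 0 by rewrite subr_eq0.
have Bx0 : (Bx r w)`_0 != 0 by rewrite coefB coefC coef_compN Ga0 mulr0 subr0.
have [Zx hZx] := exists_inv r.+1 Bx0.
have p0 : psi`_0 != 0 by rewrite psi0 ?oner_eq0 // (leq_ltn_trans _ hK).
have [Zp hZp] := exists_inv r.+1 p0.
have e1 := scal_inv_eq hZx hY.
rewrite (eqm_mul (@eqm_refl _ r.+1 (bin K v)) e1) // -scalerAr coefZ.
set H := bin K v * Zx ^+ r.+1.
rewrite (lagrange H hZp) -/phi.
have hB : eqm r.+1 (psi * (Bx r w \Po phi)) B.
  apply: eqm_XM_inv.
  have -> : 'X * (psi * (Bx r w \Po phi)) = ('X * Bx r w) \Po phi.
    by rewrite comp_polyM comp_polyX mulrA.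
  have -> : 'X * Bx r w = w *: 'X - ell F r.
    by rewrite /Bx /ell -mul_polyC polyCB polyC1; ring.
  rewrite comp_polyB comp_polyZ comp_polyX.
  have -> : 'X * B = w *: phi - 'X by rewrite /B /phi mulrBr mulr1 scalerAr.
  apply: eqm_sub => //; exact: ell_comp.
have hW : eqm r.+1 ((Zx \Po phi) * Zp) Z.
  apply: (inv_uniq (p := B)) => //.
  have e2 := eqm_mul (eqm_sym hB) (@eqm_refl _ r.+1 ((Zx \Po phi) * Zp)).
  apply: (eqm_trans e2).
  have -> : psi * (Bx r w \Po phi) * ((Zx \Po phi) * Zp) = (psi * Zp) * ((Bx r w * Zx) \Po phi).
    by rewrite comp_polyM; ring.
  have e3 := eqm_mul hZp (eqm_comp1 (phi0 F K) hZx).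
  by rewrite -polyC1 comp_polyC polyC1 mulr1 in e3.
have key : eqm r.+1 ((H \Po phi) * phi^`() * Zp ^+ r.+1) (ex K v * Z ^+ r.+1 * phi^`()).
  have -> : (H \Po phi) * phi^`() * Zp ^+ r.+1 =
      (bin K v \Po phi) * ((Zx \Po phi) * Zp) ^+ r.+1 * phi^`().
    by rewrite /H comp_polyM comp_polyXn_ exprMn; ring.
  apply: eqm_mul => //; apply: eqm_mul; first exact: bin_comp.
  exact: eqm_exp.
rewrite (key r (ltnSn r)) -scalerAr coefZ; ring.
Qed.
End Core.
Section Final.
Variable F : numFieldType.

Lemma phi_deriv_eq K (w : F) :
  w *: ('X * psiK F K)^`() = (w *: psiK F K - 1) + 1 + 'X * (w *: psiK F K - 1)^`().
Proof.
rewrite derivM derivX mul1r derivB derivZ -polyC1 derivC subr0 polyC1 subrK.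
by rewrite scalerDr scalerAr.
Qed.

Lemma main_gen (v w : F) (hw : w != 1) : U 0 w v = Utilde 0 w v /\
  (forall r : nat, (1 <= r)%N -> U r w v = Utilde r w v + v * Utilde r.-1 w v).
Proof.
have w1 : w - 1 != 0 by rewrite subr_eq0.
have gen : forall r, exists Z, [/\ eqm r.+1 ((w *: psiK F r.+1 - 1) * Z) 1,
   U r w v = kdelta r - (r`!)%:R * ((ex r.+1 v * Z ^+ r) `_r + (ex r.+1 v * Z ^+ r.+1)`_r
      + (ex r.+1 v * Z ^+ r.+1 * ('X * (w *: psiK F r.+1 - 1)^`()))`_r) &
   Utilde r w v = - ((r`!)%:R * (ex r.+1 v * Z ^+ r.+1)`_r)].
  move=> r; set B := w *: psiK F r.+1 - 1.
  have B0 : B`_0 != 0 by rewrite /B coefB coefZ psi0 // coefC mulr1.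
  have [Z hZ] := exists_inv r.+1 B0.
  exists Z; split => //; last exact: core_Ut.
  rewrite (core_U v hw (ltnSn r) hZ) phi_deriv_eq -/B.
  set E := ex r.+1 v.
  have -> : E * Z ^+ r.+1 * (B + 1 + 'X * B^`()) =
     (E * Z ^+ r) * (B * Z) + E * Z ^+ r.+1 + E * Z ^+ r.+1 * ('X * B^`()).
    by rewrite exprS; ring.
  have e := eqm_mul (@eqm_refl _ r.+1 (E * Z ^+ r)) hZ.
  by rewrite !coefD (e r (ltnSn r)) mulr1.
split.
  have [Z [_ -> ->]] := gen 0%N.
  rewrite expr0 mulr1 mulrCA coefXM /= ex0 // /kdelta /= fact0 mul1r addr0.
  ring.
case=> [//|s] _ /=.
have [Z [hZ -> ->]] := gen s.+1.
have hZs : eqm s.+1 ((w *: psiK F s.+2 - 1) * Z) 1 by apply: eqm_le hZ.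
rewrite (core_Ut v hw (ltnW (ltnSn s.+1)) hZs).
set E := ex s.+2 v; set B := w *: psiK F s.+2 - 1.
have hd : eqm s.+1 (E * Z ^+ s.+1)^`() (v *: (E * Z ^+ s.+1) - (E * Z ^+ s.+2 * B^`()) *+ s.+1).
  rewrite derivM deriv_exp /=.
  have hE := @ex_deriv F s.+1 s.+2 v (ltnSn _).
  have hZd := inv_deriv hZ.
  have e := eqm_add (eqm_mul hE (@eqm_refl _ s.+1 (Z ^+ s.+1)))
                    (eqm_mul (@eqm_refl _ s.+1 E) (eqm_muln s.+1 (eqm_mul hZd (@eqm_refl _ s.+1 (Z ^+ s))))).
  apply: (eqm_trans e).
  have -> : v *: E * Z ^+ s.+1 + E * (- (Z ^+ 2 * B^`()) * Z ^+ s *+ s.+1) =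
      v *: (E * Z ^+ s.+1) - (E * Z ^+ s.+2 * B^`()) *+ s.+1.
    by rewrite -scalerAl !exprS expr0; ring.
  exact: eqm_refl.
have h := hd s (ltnSn s).
rewrite coef_deriv coefB coefZ coefMn in h.
have -> : (E * Z ^+ s.+2 * ('X * B^`()))`_s.+1 = (E * Z ^+ s.+2 * B^`())`_s.
  by rewrite mulrCA coefXM /= mulrA.
have h' : v * (E * Z ^+ s.+1)`_s = (E * Z ^+ s.+1)`_s.+1 *+ s.+1 + (E * Z ^+ s.+2 * B^`())`_s *+ s.+1.
  by rewrite h subrK.
rewrite /kdelta /= [v * - _]mulrN [v * (_ * _)]mulrCA h' factS natrM; ring.
Qed.
End Final.

Theorem proposition6p4 (R : realType) (v w : R[i]) (hw : w != 1) :
  U 0 w v = Utilde 0 w v /\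
  (forall r : nat, (1 <= r)%N -> U r w v = Utilde r w v + v * Utilde r.-1 w v).
Proof. exact: main_gen. Qed.
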